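(* For every $d\ge 2$ there exists a constant $C$ such that for all $n\ge 2$ and all integers $k\ge 0$ the following holds: in a regular $d$-dimensional toroidal grid $(\mathbb{Z}/N\mathbb{Z})^d$ with $N^d\le n$ vertices, the number of subsets of size $k$ that have at most $\frac{k}{\log n}$ *-connected components is at most $C^k$.
   Context: Two vertices of the toroidal grid $(\mathbb{Z}/N\mathbb{Z})^d$ are *-adjacent if they are distinct and their $\ell_\infty$-distance (in the discrete torus) is at most $1$; *-connected components of a subset are its connected components with respect to *-adjacency. $\log$ is the natural logarithm. *)

(* Defs.v *)
From HB Require Import structures.
From mathcomp Require Import all_boot all_order all_algebra.
From mathcomp Require Import all_classical all_reals all_analysis.
Set Implicit Arguments. Unset Strict Implicit. Unset Printing Implicit Defensive.
Import Order.TTheory GRing.Theory Num.Theory.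

Definition torus (N d : nat) := {ffun 'I_d -> 'I_N}.

Definition cdist_le1 (N : nat) (a b : 'I_N) : bool :=
  (((a + N - b) %% N) <= 1)%N || (((b + N - a) %% N) <= 1)%N.

(* *-adjacency: distinct, and l_infty torus distance at most 1 *)
Definition star_adj (N d : nat) (x y : torus N d) : bool :=
  (x != y) && [forall i, cdist_le1 (x i) (y i)].

Definition star_adj_in (N d : nat) (S : {set torus N d}) : rel (torus N d) :=
  fun x y => [&& x \in S, y \in S & star_adj x y].

Definition star_ncomp (N d : nat) (S : {set torus N d}) : nat :=
  n_comp (star_adj_in S) S.

(* Main.v *)
Require Import Defs.
From HB Require Import structures.
From mathcomp Require Import all_boot all_order all_algebra.
From mathcomp Require Import all_classical all_reals all_analysis.
Import Order.TTheory GRing.Theory Num.Theory.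
Local Open Scope ring_scope.

From mathcomp Require Import zify lra.
Set Implicit Arguments. Unset Strict Implicit. Unset Printing Implicit Defensive.
Local Close Scope ring_scope.
Lemma mod3 N x : x < 3 * N -> x %% N = if x < N then x else if x < 2 * N then x - N else x - 2 * N.
Proof.
move=> h.
case: ltnP => h1; first by rewrite modn_small.
case: ltnP => h2.
  by rewrite -{1}(subnK h1) modnDr modn_small //; lia.
have -> : x = 2 * N + (x - 2 * N) by lia.
by rewrite modnMDl modn_small //; lia.
Qed.
Lemma off_lt3 N a b : a < N -> b < N -> ((a + N - b) %% N <= 1) || ((b + N - a) %% N <= 1) -> (b + N + 1 - a) %% N < 3.
Proof.
move=> ha hb; rewrite !mod3; try lia.
repeat case: ifP; lia.
Qed.
Lemma recov N a b : a < N -> b < N -> (a + N - 1 + (b + N + 1 - a) %% N) %% N = b.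
Proof. move=> ha hb; rewrite (@mod3 N (b + N + 1 - a)); try lia.
repeat case: ifP; move=> *; rewrite mod3; try lia; repeat case: ifP; lia.
Qed.


Section Gen.
Variables (T : finType) (e : rel T).
Hypothesis esymm : symmetric e.
Variable M : nat.
Definition gnb (x : T) : {set T} := [set y | (y == x) || e x y].
Hypothesis hM : forall x, #|gnb x| <= M.

Definition gE (S : {set T}) : rel T := fun x y => [&& x \in S, y \in S & e x y].
Definition nbS (S : {set T}) : {set T} := \bigcup_(x in S) gnb x.
Definition rootsS (S : {set T}) : {set T} := [set x in S | roots (gE S) x].
Definition cluster (R w : {set T}) : {set T} :=
  [set y in w | [exists r in R, connect (gE w) r y]].

Lemma Esym (S : {set T}) : symmetric (gE S).
Proof. by move=> x y; rewrite /gE esymm; case: (x \in S); case: (y \in S). Qed.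

Lemma card_nbS (S : {set T}) : #|nbS S| <= M * #|S|.
Proof.
rewrite /nbS mulnC -sum_nat_const.
elim/big_ind2: _ => //.
- by rewrite cards0.
- move=> A a B b Ha Hb; apply: leq_trans (leq_card_setU _ _) _.
  by apply: leq_add.
Qed.

Lemma card_rootsS (S : {set T}) : #|rootsS S| = n_comp (gE S) S.
Proof. by apply: eq_card => x; rewrite inE andbC. Qed.

Lemma sub_nbS (S : {set T}) : S \subset nbS S.
Proof.
by apply/fintype.subsetP => x xS; apply/bigcupP; exists x => //; rewrite inE eqxx.
Qed.

Lemma clusterE (S w : {set T}) : S \subset w -> [disjoint (w :\: S) & nbS S] ->
  cluster (rootsS S) w = S.
Proof.
move=> Sw dis; apply/setP => y; rewrite inE.
apply/andP/idP.
- move=> [yw /existsP [r /andP [rR cry]]].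
  move: rR; rewrite inE => /andP [rS _].
  suff cl : fingraph.closed (gE w) (mem S) by rewrite -(closed_connect cl cry).
  have step : forall a b, gE w a b -> a \in S -> b \in S.
    move=> a b /and3P [aw bw eab] aS.
    apply/negPn/negP => bS.
    have : b \in w :\: S by rewrite inE bS.
    have : b \in nbS S by apply/bigcupP; exists a => //; rewrite inE eab orbT.
    by move=> h1 h2; move: (disjointFr dis h2); rewrite h1.
  move=> a b Eab; apply/idP/idP; first exact: step.
  by apply: step; rewrite Esym.
- move=> yS; split; first by apply: (fintype.subsetP Sw).
  have cs := sym_connect_sym (Esym S).
  have cl : fingraph.closed (gE S) (mem S).
    by move=> a b /and3P [-> -> _].
  have cyr := connect_root (gE S) y.
  apply/existsP; exists (fingraph.root (gE S) y); apply/andP; split.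
    by rewrite inE roots_root // -(closed_connect cl cyr) yS.
  rewrite cs in cyr.
  apply: connect_sub cyr => a b /and3P [aS bS eab].
  apply: connect1; rewrite /gE eab !(fintype.subsetP Sw) //.
Qed.

Definition Good k c := [set S : {set T} | (#|S| == k) && (n_comp (gE S) S <= c)].

Lemma card_small c : #|[set R : {set T} | #|R| <= c]| <= (#|T|.+1) ^ c.
Proof.
pose g (f : {ffun 'I_c -> option T}) : {set T} := [set x | Some x \in codom f].
have -> : [set R : {set T} | #|R| <= c] =
    [set R in [set g f | f in [set: {ffun 'I_c -> option T}]] | #|R| <= c].
  apply/setP => R; rewrite !inE; case h: (#|R| <= c); rewrite ?andbF ?andbT //=.
  apply/esym/imsetP.
  exists [ffun i : 'I_c => nth None (map Some (enum R)) i]; first by rewrite inE.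
  apply/setP => x; rewrite inE; apply/idP/codomP.
  + move=> xR; have : x \in enum R by rewrite mem_enum.
    move=> /(nthP x) [i ilt ix]; rewrite -ix.
    have ic : i < c by apply: leq_trans ilt _; rewrite -cardE.
    by exists (Ordinal ic); rewrite ffunE /= (nth_map x).
  + move=> [i]; rewrite ffunE.
    case: (ltnP i (size (enum R))) => hi.
      by rewrite (nth_map x) // => [[->]]; rewrite -mem_enum mem_nth.
    by rewrite nth_default ?size_map.
apply: (@leq_trans #|[set g f | f in [set: {ffun 'I_c -> option T}]]|).
  by apply/subset_leq_card/fintype.subsetP => R; rewrite inE => /andP [].
apply: leq_trans (leq_imset_card _ _) _.
apply: leq_trans (max_card _) _.
by rewrite card_ffun card_option card_ord.
Qed.


Lemma card_Good k c : #|Good k c| <= (#|T|.+1) ^ c * 2 ^ (M * k).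
Proof.
pose D := [set p : {set T} * {set T} | (p.1 \in Good k c) && (p.2 \in powerset (~: nbS p.1))].
pose f (p : {set T} * {set T}) := (rootsS p.1, p.1 :|: p.2).
have keyD : forall p, p \in D -> p.1 = cluster (rootsS p.1) (p.1 :|: p.2) /\ [disjoint p.1 & p.2].
  move=> [S w]; rewrite inE /= => /andP [_]; rewrite inE => sw.
  have dis : [disjoint S & w].
    rewrite -finset.setI_eq0; apply/eqP/setP => x; rewrite !inE.
    apply/negbTE/negP => /andP [xS xw].
    by move: (fintype.subsetP sw x xw); rewrite inE (fintype.subsetP (sub_nbS S)).
  split=> //; rewrite clusterE //; first exact: finset.subsetUl.
  rewrite -finset.setI_eq0; apply/eqP/setP => x; rewrite !inE.
  apply/negbTE/negP => /andP [/andP [xS /orP [xS'|xw]] xn]; first by rewrite xS' in xS.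
  by move: (fintype.subsetP sw x xw); rewrite inE xn.
have finj : {in D &, injective f}.
  move=> p q pD qD [hr hw].
  have [h1 d1] := keyD p pD; have [h2 d2] := keyD q qD.
  have e1 : p.1 = q.1 by rewrite h1 h2 hr hw.
  have e2 : p.2 = q.2.
    have eA : forall (S w : {set T}), [disjoint S & w] -> w = (S :|: w) :\: S.
      move=> S w dSw; apply/setP => x; rewrite !inE.
      case xw: (x \in w); case xS: (x \in S) => //=.
      by move: (disjointFr dSw xS); rewrite xw.
    by rewrite (eA _ _ d1) (eA _ _ d2) hw e1.
  by move: p q {pD qD h1 h2 d1 d2 hr hw keyD} e1 e2 => [? ?] [? ?] /= -> ->.
have up : #|D| <= #|[set R : {set T} | #|R| <= c]| * 2 ^ #|T|.
  rewrite -(card_in_imset finj).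
  rewrite -cardsT -card_powerset -cardsX.
  apply/subset_leq_card/fintype.subsetP => _ /imsetP [p pD ->].
  rewrite !inE finset.subsetT andbT.
  move: pD; rewrite inE => /andP [].
  by rewrite inE => /andP [_]; rewrite card_rootsS.
have low : #|Good k c| * 2 ^ (#|T| - M * k) <= #|D|.
  have -> : #|D| = \sum_(S in Good k c) 2 ^ #|~: nbS S|.
    rewrite -sum1_card.
    rewrite (eq_bigl (fun p => (p.1 \in Good k c) && (p.2 \in powerset (~: nbS p.1)))); last first.
      by move=> p; rewrite inE.
    rewrite -(pair_big_dep (fun S => S \in Good k c) (fun S w => w \in powerset (~: nbS S)) (fun _ _ => 1)) /=.
    by apply: eq_bigr => S _; rewrite sum1_card card_powerset.
  rewrite -sum_nat_const; apply: leq_sum => S.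
  rewrite inE => /andP [/eqP Sk _].
  rewrite leq_exp2l // cardsCs finset.setCK.
  apply: leq_sub2l; rewrite -Sk; exact: card_nbS.
have := leq_trans low up.
move=> h.
have h2 : #|Good k c| * 2 ^ (#|T| - M * k) <=
    (#|T|.+1) ^ c * 2 ^ (M * k) * 2 ^ (#|T| - M * k).
  apply: leq_trans h _; rewrite -mulnA -expnD; apply: leq_mul; first exact: card_small.
  by rewrite leq_exp2l // -leq_subLR.
by rewrite leq_pmul2r ?expn_gt0 // in h2.
Qed.

End Gen.

Section Torus.
Variables (N d : nat).
Local Notation T := (torus N d).

Lemma star_sym : symmetric (@star_adj N d).
Proof.
move=> x y; rewrite /star_adj eq_sym; congr (_ && _).
by apply: eq_forallb => i; rewrite /cdist_le1 orbC.
Qed.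

Lemma cdist_refl (a : 'I_N) : cdist_le1 a a.
Proof. by rewrite /cdist_le1 addnC addnK modnn. Qed.

Lemma nb_bound (x : T) : #|gnb (@star_adj N d) x| <= 3 ^ d.
Proof.
pose off (y : T) : {ffun 'I_d -> 'I_3} :=
  [ffun i => inord ((y i + N + 1 - x i) %% N)].
have cd : forall y, y \in gnb (@star_adj N d) x -> forall i, cdist_le1 (x i) (y i).
  move=> y; rewrite inE => /orP [/eqP -> i|/andP [_ /forallP h] i]; last exact: h.
  exact: cdist_refl.
have -> : (3 ^ d = #|{ffun 'I_d -> 'I_3}|)%N by rewrite card_ffun !card_ord.
apply: (@leq_card_in _ _ off) => y1 y2 h1 h2 eq12.
apply/ffunP => i.
have := congr1 (fun f : {ffun 'I_d -> 'I_3} => nat_of_ord (f i)) eq12; rewrite /off !ffunE /=.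
have l1 := off_lt3 (ltn_ord (x i)) (ltn_ord (y1 i)) (cd _ h1 i).
have l2 := off_lt3 (ltn_ord (x i)) (ltn_ord (y2 i)) (cd _ h2 i).
rewrite !inordK // => he; apply: ord_inj.
by rewrite -(recov (ltn_ord (x i)) (ltn_ord (y1 i))) he recov.
Qed.

End Torus.
Local Open Scope ring_scope.

Theorem claim3p4 (R : realType) (d : nat) (hd : (2 <= d)%N) :
  exists C : R, forall (n k N : nat), (2 <= n)%N -> (0 < N)%N -> (N ^ d <= n)%N ->
    (#|[set S : {set torus N d} |
         (#|S| == k) && ((star_ncomp S)%:R <= k%:R / ln (n%:R : R))]|)%:R
    <= C ^+ k.
Proof.
pose M := (3 ^ d)%N.
exists (expR 2 * (2 ^ M)%:R).
move=> n k N hn hN hNn.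
set A := [set S : {set torus N d} | _].
pose c := (\max_(S in A) star_ncomp S)%N.
have hsub : A \subset Good (@star_adj N d) k c.
  apply/fintype.subsetP => S SA; rewrite inE.
  move: (SA); rewrite inE => /andP [-> _] /=.
  exact: (@leq_bigmax_cond _ (fun S => S \in A) (fun S : {set torus N d} => star_ncomp S) S SA).
have hln : 0 < ln (n%:R : R) by apply: ln_gt0; rewrite ltr1n.
have hc : (c%:R * ln n%:R <= k%:R :> R).
  rewrite -ler_pdivlMr //.
  case: (posnP #|A|) => hA.
    rewrite (_ : c = 0%N); first by rewrite divr_ge0 ?ler0n ?ltW.
    by rewrite /c big_pred0 //; apply: card0_eq.
  rewrite /c; have [S SA ->] := @eq_bigmax_cond _ (fun S => S \in A) (fun S : {set torus N d} => star_ncomp S) hA.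
  by move: SA; rewrite inE => /andP [_].
have hcard := leq_trans (subset_leq_card hsub) (card_Good (@star_sym N d) (@nb_bound N d) k c).
rewrite card_ffun !card_ord in hcard.
apply: le_trans (_ : ((((N ^ d).+1 ^ c) * 2 ^ (M * k))%N%:R <= _)).
  by rewrite ler_nat.
rewrite natrM exprMn; apply: ler_pM; rewrite ?ler0n //; last by rewrite expnM natrX.
have mono : forall a b e, (a <= b)%N -> (a ^ e <= b ^ e)%N.
  by move=> a b e ab; elim: e => // e IH; rewrite !expnS leq_mul.
have h1 : ((N ^ d).+1 ^ c <= n ^ (2 * c))%N.
  rewrite expnM; apply: mono.
  apply: (@leq_trans n.+1); first by rewrite ltnS.
  by rewrite -addn1 expnS expn1; nia.
apply: le_trans (_ : (n ^ (2 * c))%N%:R <= _); first by rewrite ler_nat.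
have n0 : (0 : R) < n%:R by rewrite ltr0n; apply: leq_trans hn.
rewrite natrX -[X in X <= _]lnK ?posrE ?exprn_gt0 // lnXn // -expRM_natl ler_expR.
rewrite -[ln _ *+ _]mulr_natr natrM; nra.
Qed.
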